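(* Let $p/q$ be an even rational parameter, $\omega=p+q$, $P=2p/\omega$. Let $\Lambda_P\subset\mathbb R^3$ be the lattice generated by $(2,P,P)$, $(0,2,0)$, $(0,0,2)$, let $\mathcal C=\{(m+\tfrac12,n+\tfrac12): m,n\in\mathbb Z\}$, let $L\subset\mathbb Z^2$ be the lattice generated by $(\omega^2,0)$ and $(0,\omega)$, and let $\mathcal X=\frac{\mathbb Z_1}{\omega}\times\frac{\mathbb Z_0}{\omega}\times\frac{\mathbb Z_0}{\omega}\subset\mathbb R^3$, where $\mathbb Z_0$ and $\mathbb Z_1$ are the even and the odd integers. Define $\Xi:\mathbb R^2\to\mathbb R^3/\Lambda_P$ by $\Xi(x,y)=(2Px+2y,\,2Px,\,2Px+2Py)\bmod\Lambda_P$. Then $\Xi$ induces a well-defined map $\mathcal C/L\to\mathcal X/\Lambda_P$, and this map is a bijection.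
   Context: An even rational parameter is a rational $p/q\in(0,1)$, with $p,q$ positive coprime integers, such that $pq$ is even. Note $\Lambda_P$ preserves $\mathcal X$. *)

(* Defs.v *)
From HB Require Import structures.
From mathcomp Require Import all_boot all_order all_algebra.
Set Implicit Arguments. Unset Strict Implicit. Unset Printing Implicit Defensive.
Import Order.TTheory GRing.Theory Num.Theory.
Local Open Scope ring_scope.

Definition sub3 (R : realFieldType) (u v : R * R * R) : R * R * R :=
  (u.1.1 - v.1.1, u.1.2 - v.1.2, u.2 - v.2).
Definition sub2 (R : realFieldType) (u v : R * R) : R * R :=
  (u.1 - v.1, u.2 - v.2).

Definition even_rational_param (p q : nat) : Prop :=
  [/\ (0 < p)%N, (p < q)%N, coprime p q & ~~ odd (p * q)].

Definition omega (p q : nat) : nat := (p + q)%N.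
Definition Ppar (R : realFieldType) (p q : nat) : R := (2 * p)%:R / (omega p q)%:R.

Definition inLambda (R : realFieldType) (P : R) (v : R * R * R) : Prop :=
  exists a b c : int,
    v = (a%:~R * 2, a%:~R * P + b%:~R * 2, a%:~R * P + c%:~R * 2).

Definition inC (R : realFieldType) (c : R * R) : Prop :=
  exists m n : int, c = (m%:~R + 2^-1, n%:~R + 2^-1).

Definition inL (R : realFieldType) (w : nat) (u : R * R) : Prop :=
  exists a b : int, u = (a%:~R * (w ^ 2)%:R, b%:~R * w%:R).

Definition inX (R : realFieldType) (w : nat) (v : R * R * R) : Prop :=
  exists a b c : int,
    v = ((2 * a + 1)%:~R / w%:R, (2 * b)%:~R / w%:R, (2 * c)%:~R / w%:R).

(* Xi(x,y) = (2Px+2y, 2Px, 2Px+2Py) (representative in R^3, taken mod Lambda_P). *)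
Definition Xi (R : realFieldType) (P : R) (c : R * R) : R * R * R :=
  (2 * P * c.1 + 2 * c.2, 2 * P * c.1, 2 * P * c.1 + 2 * P * c.2).

(* Main.v *)
Require Import Defs.
From mathcomp Require Import all_boot all_order all_algebra ring lra zify.
Import Order.TTheory GRing.Theory Num.Theory.
Local Open Scope ring_scope.

Lemma wodd p q : even_rational_param p q -> exists k : nat, omega p q = (2*k+1)%N.
Proof.
case=> p0 pq cop ev; rewrite /omega.
have oq : odd (p + q).
  rewrite oddD; move: ev; rewrite oddM.
  case op: (odd p); case oq: (odd q) => //= _.
  have : (2 %| gcdn p q)%N by rewrite dvdn_gcd !dvdn2 op oq.
  by rewrite (eqP cop).
exists (p + q)./2; rewrite -[in LHS](odd_double_half (p+q)) oq; lia.
Qed.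

Lemma copz p q : even_rational_param p q -> coprimez (2 * p%:Z) (omega p q)%:Z.
Proof.
move=> H; have [k hk] := wodd _ _ H; case: H => p0 pq cop ev.
rewrite coprimezE -PoszM !absz_nat coprimeMl coprime2n hk.
have -> : odd (2*k+1) by rewrite oddD oddM.
by rewrite -hk /omega /coprime gcdnDl.
Qed.

Lemma bez (a w : int) : coprimez a w -> exists u v, u * a + v * w = 1.
Proof. move=> c; case: (Bezoutz a w) => u [v e]; exists u, v; by rewrite e (eqP c). Qed.

Lemma solve_lin (a w z u v : int) : u * a + v * w = 1 -> exists x y, z = a * x + w * y.
Proof.
move=> H; exists (u * z), (v * z).
have E : z * (u * a + v * w) = a * (u * z) + w * (v * z) by ring.
by rewrite H mulr1 in E.
Qed.

Arguments solve_lin {a w} z {u v}.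

Lemma dvd_cancel (a w x y u v : int) : u * a + v * w = 1 -> a * x = w * y -> x = w * (u * y + v * x).
Proof.
move=> H E.
have E2 : x * (u * a + v * w) = u * (a * x) + w * (v * x) by ring.
rewrite H mulr1 E in E2; rewrite {1}E2; ring.
Qed.

Arguments dvd_cancel {a w x y u v}.

Lemma surj_int (p w u v z1 z2 z3 : int) : u * (2 * p) + v * w = 1 ->
  exists m n A B C : int,
    [/\ z1 = 2 * p * m + w * n + w * A,
        z2 = 2 * p * m + p * A + w * B &
        z3 = 2 * p * m + 2 * p * n + p * A + w * C].
Proof.
move=> H.
have H2 : (u * 2) * p + v * w = 1 by rewrite -[RHS]H; ring.
have H4 : (u ^+ 2) * (2 * p * (2 * p)) + (v * (4 * p * u + v * w)) * w = (u * (2 * p) + v * w) ^+ 2 by ring.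
rewrite H expr1n in H4.
have [m0 [s0 E1]] := solve_lin z1 H.
have [A0 [B0 E2]] := solve_lin (z2 - 2 * p * m0) H2.
have [t [D E3]] := solve_lin (z3 - z2 - 2 * p * s0 + 2 * p * A0) H4.
exists (m0 - w * t), (s0 + 2 * p * t - A0), A0, (B0 + 2 * p * t), (B0 + 2 * p * t + D).
have e2 : z2 = p * A0 + w * B0 + 2 * p * m0 by rewrite -E2; ring.
have e3 : z3 = 2 * p * (2 * p) * t + w * D + z2 + 2 * p * s0 - 2 * p * A0 by rewrite -E3; ring.
rewrite e3 e2 E1; split; ring.
Qed.

Lemma inj_int (p w u v m n A B C : int) : u * (2 * p) + v * w = 1 -> w != 0 ->
  2 * p * m + w * n - w * A = 0 ->
  2 * p * m - p * A - w * B = 0 ->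
  2 * p * m + 2 * p * n - p * A - w * C = 0 ->
  exists a b : int, m = a * w ^+ 2 /\ n = b * w.
Proof.
move=> H w0 E1 E2 E3.
have Hp : (u * 2) * p + v * w = 1 by rewrite -[RHS]H; ring.
have H2 : (u * p) * 2 + v * w = 1 by rewrite -[RHS]H; ring.
have [k ek] : exists k, m = w * k.
  exists (u * (A - n) + v * m); apply: (dvd_cancel H).
  by rewrite -[LHS]subr0 -E1; ring.
have eA : A = 2 * p * k + n.
  apply: (mulfI w0); rewrite -[LHS]addr0 -E1 ek; ring.
have [r er] : exists r, 2 * p * k + n = w * r.
  exists (u * 2 * (2 * p * k - B) + v * (2 * p * k + n)); apply: (dvd_cancel Hp).
  by rewrite -[LHS]addr0 -E2 ek eA; ring.
have [s es] : exists s, 2 * p * k - n = w * s.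
  exists (u * 2 * (2 * p * k - C) + v * (2 * p * k - n)); apply: (dvd_cancel Hp).
  by rewrite -[LHS]addr0 -E3 ek eA; ring.
have [t et] : exists t, k = w * t.
  have e2k : 2 * k = w * (u * (r + s) + v * (2 * k)).
    apply: (dvd_cancel H); rewrite mulrDr -er -es; ring.
  exists (u * p * (u * (r + s) + v * (2 * k)) + v * k); exact: (dvd_cancel H2).
exists t, (u * p * (r - s) + v * n); split.
  by rewrite ek et; ring.
have e2n : 2 * n = w * (r - s) by rewrite mulrBr -er -es; ring.
rewrite mulrC; exact: (dvd_cancel H2 e2n).
Qed.

Lemma zero_of (R : realFieldType) (x y : R) (k : R) (t : R) : x = y -> t = k * (x - y) -> t = 0.
Proof. by move=> -> ->; rewrite subrr mulr0. Qed.

Theorem lemma3p1 (R : realFieldType) (p q : nat) :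
  even_rational_param p q ->
  let w := omega p q in
  let P : R := Ppar R p q in
  (forall c, inC c -> exists x, inX w x /\ inLambda P (sub3 (Xi P c) x)) /\
  (forall c c', inC c -> inC c' -> inL w (sub2 c c') ->
     inLambda P (sub3 (Xi P c) (Xi P c'))) /\
  (forall c c', inC c -> inC c' -> inLambda P (sub3 (Xi P c) (Xi P c')) ->
     inL w (sub2 c c')) /\
  (forall x, inX w x -> exists c, inC c /\ inLambda P (sub3 (Xi P c) x)).
Proof.
move=> H; cbv zeta; rewrite /Ppar.
have [k hk] := wodd _ _ H.
have [u [v Huv]] := bez _ _ (copz _ _ H).
have W0 : ((omega p q)%:R : R) != 0 by rewrite hk pnatr_eq0 addn1.
move: hk Huv W0; generalize (omega p q) => w hk Huv W0.
have K0 : (2 * k%:R + 1 : R) != 0 by move: W0; rewrite hk natrD natrM.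
split.
  move=> c [m [n ->]]; exists (Xi ((2 * p)%:R / (w)%:R) (m%:~R + 2^-1, n%:~R + 2^-1)); split; last first.
    by exists 0, 0, 0; rewrite /sub3 !subrr; congr (_,_,_); ring.
  exists (p%:Z * (2 * m + 1) + 2 * k%:Z * n + k%:Z + n), (p%:Z * (2 * m + 1)), (p%:Z * (2 * m + 1) + p%:Z * (2 * n + 1)).
  rewrite /Xi /=; congr (_,_,_); rewrite hk; field; exact: K0.
split.
  move=> c c' [m [n ->]] [m' [n' ->]] [a [b Hab]].
  rewrite /sub2 /= in Hab; case: Hab => H1 H2.
  have Em : (m%:~R : R) = m'%:~R + a%:~R * ((w)^2)%:R by rewrite -H1; ring.
  have En : (n%:~R : R) = n'%:~R + b%:~R * (w)%:R by rewrite -H2; ring.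
  exists ((w)%:Z * (2 * p%:Z * a + b)),
    (2 * p%:Z * a * (w)%:Z - p%:Z * (2 * p%:Z * a + b)),
    (2 * p%:Z * a * (w)%:Z + 2 * p%:Z * b - p%:Z * (2 * p%:Z * a + b)).
  rewrite /sub3 /Xi /= Em En natrX; congr (_,_,_); field; done.
split.
  move=> c c' [m [n ->]] [m' [n' ->]] [A [B [C HL]]].
  rewrite /sub3 /Xi /= in HL; case: HL => E1 E2 E3.
  have I1 : 2 * p%:Z * (m - m') + (w)%:Z * (n - n') - (w)%:Z * A = 0.
    apply/eqP; rewrite -(intr_eq0 R); apply/eqP.
    apply: (@zero_of R _ _ ((w)%:R / 2) _ E1); field; done.
  have I2 : 2 * p%:Z * (m - m') - p%:Z * A - (w)%:Z * B = 0.
    apply/eqP; rewrite -(intr_eq0 R); apply/eqP.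
    apply: (@zero_of R _ _ ((w)%:R / 2) _ E2); field; done.
  have I3 : 2 * p%:Z * (m - m') + 2 * p%:Z * (n - n') - p%:Z * A - (w)%:Z * C = 0.
    apply/eqP; rewrite -(intr_eq0 R); apply/eqP.
    apply: (@zero_of R _ _ ((w)%:R / 2) _ E3); field; done.
  have w0 : (w)%:Z != 0 by rewrite hk addn1.
  have [a [b [ea eb]]] := inj_int _ _ _ _ _ _ _ _ _ Huv w0 I1 I2 I3.
  exists a, b; rewrite /sub2 /=.
  have -> : m = m' + a * (w)%:Z ^+ 2 by rewrite -ea; ring.
  have -> : n = n' + b * (w)%:Z by rewrite -eb; ring.
  rewrite natrX; congr (_,_); ring.
move=> x [a [b [c ->]]].
have [m [n [A [B [C [E1 E2 E3]]]]]] := surj_int _ _ _ _ (a - p%:Z - k%:Z) (b - p%:Z) (c - 2 * p%:Z) Huv.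
exists (m%:~R + 2^-1, n%:~R + 2^-1); split; first by exists m, n.
exists (-A), (-B), (-C).
have ea : a = (a - p%:Z - k%:Z) + p%:Z + k%:Z by ring.
have eb : b = (b - p%:Z) + p%:Z by ring.
have ec : c = (c - 2 * p%:Z) + 2 * p%:Z by ring.
rewrite E1 in ea; rewrite E2 in eb; rewrite E3 in ec.
rewrite /sub3 /Xi /= ea eb ec; rewrite hk; congr (_,_,_); field; exact: K0.
Qed.
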